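(* Let $S\subset[0,\infty)$ with $0\in S$, let $C>0$, and let $f\colon S\to[0,\infty)$ be a right-continuous decreasing function with $DP(\overline{f})\subset S$. If $f$ vanishes at infinity, then there exists a sequence $\{F_n\}_{n=0}^\infty$ of finite subsets of $S$ such that $0\in F_n$, $F_n\subset F_{n+1}$, and $\|g^f_{F_n}-f\|<C/2^n$ for all $n\in\mathbb{N}$, where $\|\cdot\|$ is the supremum norm over $S$.
   Context: For $S\subset[0,\infty)$ with $0\in S$, a function on $S$ is right-continuous if it is right-continuous for the relative topology of $S$. For a right-continuous decreasing $f\colon S\to[0,\infty)$ and $x\in\overline{S}$ (closure in $\mathbb{R}$), set $f(x+):=\sup\{f(y)\mid y\in(x,\infty)\cap S\}$ whenever $(x,\infty)\cap S\neq\emptyset$, and $f(x-):=\inf\{f(y)\mid y\in[0,x)\cap S\}$ if $x\neq0$, $f(0-):=f(0)$. Define $\overline{f}\colon\overline{S}\to[0,\infty)$ by $\overline{f}(x)=f(x)$ if $x\in S$, $\overline{f}(x)=f(x+)$ if $x\in\overline{S}\setminus S$ is a right accumulation point of $S$, and $\overline{f}(x)=f(x-)$ otherwise; with $\overline{f}(x-)$ defined by the same formula applied to $\overline{f}$ on $\overline{S}$, let $DP(\overline{f}):=\{x\in\overline{S}\setminus\{0\}\mid\overline{f}(x-)>\overline{f}(x)\}$. $f$ vanishes at infinity if for every $\varepsilon>0$ there is $x\in S$ with $f(y)<\varepsilon$ for all $y\in S$, $y\geq x$. For a finite $F=\{0=x_0<x_1<\cdots<x_m\}\subset S$ and decreasing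 $f$, the step function $g^f_F\colon S\to[0,\infty)$ is $g^f_F:=\sum_{i=1}^m f(x_{i-1})\chi_{[x_{i-1},x_i)\cap S}$, which is $0$ on $[x_m,\infty)\cap S$. *)

(* Defs.v *)
From HB Require Import structures.
From mathcomp Require Import all_boot all_order all_algebra.
From mathcomp Require Import all_classical all_reals.
Set Implicit Arguments. Unset Strict Implicit. Unset Printing Implicit Defensive.
Import Order.TTheory GRing.Theory Num.Theory.
Local Open Scope classical_set_scope.
Local Open Scope ring_scope.

Section Defs.
Variable R : realType.
Implicit Types (S : set R) (f : R -> R).

Definition closureR S : set R :=
  [set x | forall e : R, 0 < e -> exists2 y, S y & `|x - y| < e].

Definition right_cont S f : Prop :=
  forall x, S x -> forall e : R, 0 < e -> exists2 d : R, 0 < d &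
    forall y, S y -> x <= y -> y < x + d -> `|f y - f x| < e.

Definition decr_on S f : Prop :=
  forall x y, S x -> S y -> x <= y -> f y <= f x.

Definition fplus S f (x : R) : R := sup [set f y | y in [set y | S y /\ x < y]].

Definition fminus S f (x : R) : R :=
  if `[< x = 0 >] then f 0 else inf [set f y | y in [set y | S y /\ 0 <= y /\ y < x]].

Definition right_acc S (x : R) : Prop :=
  forall e : R, 0 < e -> exists2 y, S y & x < y < x + e.

Definition fbar S f (x : R) : R :=
  if `[< S x >] then f x
  else if `[< right_acc S x >] then fplus S f x
  else fminus S f x.

Definition DP S f : set R :=
  [set x | closureR S x /\ x <> 0 /\
           fbar S f x < fminus (closureR S) (fbar S f) x].

Definition vanishes_at_infty S f : Prop :=
  forall e : R, 0 < e -> exists2 x, S x &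
    forall y, S y -> x <= y -> f y < e.

(* step function g^f_F, F given by its strictly increasing enumeration
   [:: x_0 = 0; x_1; ...; x_m] *)
Definition stepfun S f (F : seq R) (y : R) : R :=
  \sum_(1 <= i < size F)
     (if `[< S y /\ nth 0 F i.-1 <= y < nth 0 F i >] then f (nth 0 F i.-1) else 0).

Definition supnormS S (g : R -> R) : R := sup [set `|g x| | x in S].

End Defs.

(* Main.v *)
Require Import Defs.
From HB Require Import structures.
From mathcomp Require Import all_boot all_order all_algebra.
From mathcomp Require Import all_classical all_reals.
From mathcomp Require Import ring lra.
Import Order.TTheory GRing.Theory Num.Theory.
Local Open Scope classical_set_scope.
Local Open Scope ring_scope.
Lemma step (R : realType) (S : set R) (f : R -> R) (eps x : R) :
  (forall x, S x -> 0 <= x) -> S 0 -> right_cont S f -> decr_on S f ->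
  DP S f `<=` S -> vanishes_at_infty S f ->
  0 < eps -> S x -> eps < f x ->
  exists p, [/\ S p, x < p, f p <= f x - eps/2 &
    forall y, S y -> x <= y -> y < p -> f x <= f y + eps].
Proof.
move=> S0 S00 rc dec dp van e0 Sx ex.
set d := eps / 2.
have d0 : 0 < d by rewrite /d divr_gt0.
have ed : eps = d + d by rewrite /d; field.
pose T := [set y | S y /\ x < y /\ f y < f x - d].
have [z Sz zv] := van d d0.
have Tz : T z.
  have [xz|zx] := ltP x z.
    by split=> //; split=> //; have := zv z Sz (lexx _); lra.
  by have := zv x Sx zx; lra.
have lbT : lbound T x by move=> y [_ []] /ltW.
have hlT : has_lbound T by exists x.
have neT : T !=set0 by exists z.
have hiT : has_inf T by [].
set s := inf T.
have xs : x <= s by apply: lb_le_inf.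
have sT : forall t, T t -> s <= t by move=> t Tt; apply: ge_inf.
have adh : forall e, 0 < e -> exists2 t, T t & t < s + e.
  by move=> e e0'; apply: inf_adherent.
have fb : forall y, S y -> f y <= f 0.
  by move=> y Sy; apply: dec => //; apply: S0.
have hA : forall y, S y -> y < s -> f x - d <= f y.
  move=> y Sy ys; have [yx|xy] := leP y x.
    by have := dec _ _ Sy Sx yx; lra.
  rewrite leNgt; apply/negP => fy.
  by have := sT y (conj Sy (conj xy fy)); rewrite leNgt ys.
have hB : forall y, S y -> s < y -> f y < f x - d.
  move=> y Sy sy; have sy' : 0 < y - s by rewrite subr_gt0.
  have [t [St [xt ft]] ty] := adh (y - s) sy'.
  rewrite addrC subrK in ty.
  by have := dec _ _ St Sy (ltW ty); lra.
have [Ss|nSs] := pselect (S s).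
  have fs : f s <= f x - d.
    apply/ler_addgt0Pr => e e0'.
    have [dd dd0 hd] := rc s Ss e e0'.
    have [t [St [xt ft]] ts] := adh dd dd0.
    have := hd t St (sT t (conj St (conj xt ft))) ts.
    rewrite ltr_norml => /andP[h1 h2]; lra.
  have xs' : x < s.
    rewrite lt_neqAle xs andbT; apply/eqP => exs.
    by move: fs; rewrite -exs; lra.
  exists s; split => // y Sy xy ys.
  by have := hA y Sy ys; lra.
have s0 : s <> 0 by move=> s0; apply: nSs; rewrite s0.
have s0' : 0 < s.
  by rewrite lt_neqAle eq_sym (introF eqP s0) (le_trans (S0 x Sx) xs).
have cls : closureR S s.
  move=> e e0'; have [t [St [xt ft]] ts] := adh e e0'.
  exists t => //; have := sT t (conj St (conj xt ft)).
  move=> st; rewrite distrC ger0_norm ?subr_ge0 //; lra.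
have ras : right_acc S s.
  move=> e e0'; have [t [St [xt ft]] ts] := adh e e0'.
  exists t => //; rewrite ts andbT lt_neqAle sT; last by split.
  by rewrite andbT; apply/eqP => st; apply: nSs; rewrite st.
have ndp : ~ DP S f s by move=> /dp.
have hub : forall A : set R, A `<=` S -> has_ubound [set f y | y in A].
  by move=> A AS; exists (f 0) => _ [y Ay <-]; apply: fb; apply: AS.
have low : f x - d <= fminus (closureR S) (fbar S f) s.
  rewrite /fminus asboolF //; apply: lb_le_inf.
    exists (fbar S f 0), 0 => //; split; last by split.
    by move=> e e0'; exists 0 => //; rewrite subrr normr0.
  move=> _ [y [cly [y0 ys]] <-].
  rewrite /fbar; case: (pselect (S y)) => Sy.
    by rewrite asboolT //; apply: hA.
  rewrite asboolF //; case: (pselect (right_acc S y)) => ray.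
    rewrite asboolT // /fplus.
    have sy0 : 0 < s - y by rewrite subr_gt0.
    have [z1 Sz1 /andP[yz zs]] := ray _ sy0.
    rewrite addrC subrK in zs.
    apply: (le_trans (hA z1 Sz1 zs)); apply: ub_le_sup.
      by apply: hub => w [].
    by exists z1.
  rewrite asboolF // /fminus; case: (pselect (y = 0)) => y0'.
    rewrite asboolT //; have := dec _ _ S00 Sx (S0 x Sx); lra.
  rewrite asboolF //; apply: lb_le_inf.
    exists (f 0), 0 => //; split => //; split => //.
    by rewrite lt_neqAle y0 andbT eq_sym; apply/eqP.
  by move=> _ [z1 [Sz1 [z0 zy]] <-]; apply: hA => //; apply: lt_trans zy ys.
have hup : f x - d <= fplus S f s.
  apply: (le_trans low); rewrite leNgt; apply/negP => h; apply: ndp.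
  split => //; split => //.
  by move: h; rewrite /fbar asboolF // asboolT.
pose E := [set f y | y in [set y | S y /\ s < y]].
have hsE : has_sup E.
  split; last by apply: hub => w [].
  have [t [St [xt ft]] ts] := adh 1 ltr01.
  exists (f t), t => //; split => //; rewrite lt_neqAle sT; last by split.
  by rewrite andbT; apply/eqP => st; apply: nSs; rewrite st.
have [_ [p [Sp sp] <-] hp] := sup_adherent d0 hsE.
exists p; split => //.
- exact: le_lt_trans xs sp.
- by have := hB p Sp sp; lra.
move=> y Sy xy yp; have [ys|sy] := ltP y s.
  by have := hA y Sy ys; lra.
have sy' : s < y.
  rewrite lt_neqAle sy andbT; apply/eqP => st; apply: nSs; rewrite st //.
have := dec _ _ Sy Sp (ltW yp).
move: hup; rewrite /fplus -/E; lra.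
Qed.
Arguments step {R S f eps x}.
Lemma stepfun_val (R : realType) (S : set R) (f : R -> R) (F : seq R) (y : R) :
  sorted <%R F -> 0 \in F -> S y -> 0 <= y ->
  (exists a, [/\ a \in F, a <= y, (forall b, b \in F -> b <= y -> b <= a)
      & stepfun S f F y = f a])
  \/ ((forall b, b \in F -> b <= y) /\ stepfun S f F y = 0).
Proof.
move=> sF F0 Sy y0.
have sFle : sorted <=%R F by move: sF; rewrite lt_sorted_uniq_le => /andP[].
have mono : forall i j, (i < size F)%N -> (j < size F)%N -> (i <= j)%N ->
    nth 0 F i <= nth 0 F j.
  by move=> i j iF jF ij; apply: (sorted_leq_nth le_trans lexx 0 sFle).
have [hasF|nhas] := boolP (has (fun a => y < a) F); last first.
  right; have allF : forall b, b \in F -> b <= y.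
    by move=> b bF; move/hasPn : nhas => /(_ b bF); rewrite -leNgt.
  split=> //; rewrite /stepfun big1_seq // => j /andP[_ jr].
  rewrite asboolF // => -[_ /andP[_ ylt]].
  move: jr; rewrite mem_index_iota => /andP[_ jF].
  by have := allF _ (mem_nth 0 jF); rewrite leNgt ylt.
left; set i := find (fun a => y < a) F.
have iF : (i < size F)%N by rewrite -has_find.
have yi : y < nth 0 F i by apply: (nth_find 0 hasF).
have i0 : (0 < i)%N.
  rewrite lt0n; apply/negP => /eqP i0; move: yi; rewrite i0.
  have idx : (index (0%R : R) F < size F)%N by rewrite index_mem.
  have := mono 0%N _ (leq_ltn_trans (leq0n _) idx) idx (leq0n _).
  by rewrite nth_index // => h1 h2; have := lt_le_trans h2 h1; rewrite ltNge y0.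
have i1 : (i.-1 < i)%N by rewrite prednK.
have i1F : (i.-1 < size F)%N by apply: ltn_trans iF.
have yi1 : nth 0 F i.-1 <= y.
  by have := before_find 0 i1; rewrite leNgt => ->.
exists (nth 0 F i.-1); split => //.
- exact: mem_nth.
- move=> b bF by'; rewrite -(nth_index 0 bF); apply: (mono); rewrite ?index_mem //.
  rewrite -ltnS prednK //; rewrite ltnNge; apply/negP => ib.
  have bi : (index b F < size F)%N by rewrite index_mem.
  have := mono _ _ iF bi ib.
  by rewrite nth_index // => h; have := lt_le_trans yi h; rewrite ltNge by'.
rewrite /stepfun (bigD1_seq i) /=; last exact: iota_uniq.
  2: by rewrite mem_index_iota i0.
rewrite asboolT; last by split => //; rewrite yi1 yi.
rewrite big1_seq ?addr0 // => j /andP[ji jr].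
rewrite asboolF // => -[_ /andP[h1 h2]].
move: jr; rewrite mem_index_iota => /andP[j1 jF].
have [lt_ji|lt_ij] := ltnP j i.
  have := mono j i.-1 jF i1F; rewrite -ltnS prednK // => /(_ lt_ji) h.
  by have := lt_le_trans h2 (le_trans h yi1); rewrite ltxx.
have lt_ij' : (i < j)%N by rewrite ltn_neqAle eq_sym ji lt_ij.
have := mono i j.-1 iF (leq_ltn_trans (leq_pred _) jF).
rewrite -ltnS prednK ?(leq_ltn_trans (leq0n _) lt_ij') // => /(_ lt_ij') h.
by have := le_trans h h1; rewrite leNgt yi.
Qed.
Arguments stepfun_val {R S} f {F y}.

Lemma final_bound (R : realType) (S : set R) (f : R -> R) (F : seq R) (eps : R) :
  (forall x, S x -> 0 <= x) -> S 0 -> (forall x, S x -> 0 <= f x) ->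
  decr_on S f -> sorted <%R F -> (forall a, a \in F -> S a) -> 0 \in F ->
  (exists m, [/\ m \in F, f m <= eps & forall y, S y -> y < m ->
      exists a, [/\ a \in F, a <= y & f a <= f y + eps]]) ->
  supnormS S (fun y => stepfun S f F y - f y) <= eps.
Proof.
move=> S0 S00 fp dec sF FS F0 [m [mF fm hm]].
apply: ge_sup; first by exists `|stepfun S f F 0 - f 0|, 0.
move=> _ [y Sy <-].
have fy := fp y Sy.
have [[a [aF ay amax ->]]|[allF ->]] := stepfun_val f sF F0 Sy (S0 y Sy).
  have fya := dec _ _ (FS a aF) Sy ay.
  rewrite ger0_norm ?subr_ge0 //.
  have [ym|my] := ltP y m.
    have [b [bF bY fb]] := hm y Sy ym.
    have := dec _ _ (FS b bF) (FS a aF) (amax b bF bY); lra.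
  have := dec _ _ (FS m mF) (FS a aF) (amax m mF my); lra.
rewrite sub0r normrN ger0_norm //.
have := dec _ _ (FS m mF) Sy (allF m mF); lra.
Qed.
Arguments final_bound {R S} f {F eps}.

Lemma build (R : realType) (S : set R) (f : R -> R) (eps : R) :
  (forall x, S x -> 0 <= x) -> S 0 -> (forall x, S x -> 0 <= f x) ->
  right_cont S f -> decr_on S f ->
  DP S f `<=` S -> vanishes_at_infty S f -> 0 < eps ->
  forall k x, S x -> f x <= k%:R * (eps / 2) ->
  exists G : seq R, [/\ x \in G, (forall a, a \in G -> S a) &
    exists m, [/\ m \in G, f m <= eps & forall y, S y -> x <= y -> y < m ->
      exists a, [/\ a \in G, a <= y & f a <= f y + eps]]].
Proof.
move=> S0 S00 fp rc dec dp van e0; elim=> [|k IH] x Sx fx.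
  exists [:: x]; split; first by rewrite inE.
    by move=> a; rewrite inE => /eqP ->.
  exists x; split; first by rewrite inE.
    by move: fx; rewrite mul0r; lra.
  by move=> y _ xy yx; have := le_lt_trans xy yx; rewrite ltxx.
have [fxe|efx] := leP (f x) eps.
  exists [:: x]; split; first by rewrite inE.
    by move=> a; rewrite inE => /eqP ->.
  exists x; split => //; first by rewrite inE.
  by move=> y _ xy yx; have := le_lt_trans xy yx; rewrite ltxx.
have [p [Sp xp fpx hp]] := step S0 S00 rc dec dp van e0 Sx efx.
have fpk : f p <= k%:R * (eps / 2).
  by move: fx; rewrite -natr1 mulrDl mul1r; lra.
have [G [pG GS [m [mG fm hm]]]] := IH p Sp fpk.
exists (x :: G); split; first by rewrite inE eqxx.
  by move=> a; rewrite inE => /orP[/eqP ->|/GS].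
exists m; split => //; first by rewrite inE mG orbT.
move=> y Sy xy ym; have [yp|py] := ltP y p.
  by exists x; split => //; [rewrite inE eqxx|apply: hp].
have [a [aG ay fa]] := hm y Sy py ym.
by exists a; split => //; rewrite inE aG orbT.
Qed.
Arguments build {R S f eps}.

Lemma goodG (R : realType) (S : set R) (f : R -> R) (eps : R) :
  (forall x, S x -> 0 <= x) -> S 0 -> (forall x, S x -> 0 <= f x) ->
  right_cont S f -> decr_on S f ->
  DP S f `<=` S -> vanishes_at_infty S f -> 0 < eps ->
  exists G : seq R, [/\ 0 \in G, (forall a, a \in G -> S a) &
    exists m, [/\ m \in G, f m <= eps & forall y, S y -> y < m ->
      exists a, [/\ a \in G, a <= y & f a <= f y + eps]]].
Proof.
move=> S0 S00 fp rc dec dp van e0.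
have e20 : 0 < eps / 2 by rewrite divr_gt0.
set k := (Num.trunc (f 0 / (eps / 2))).+1.
have fk : f 0 <= k%:R * (eps / 2).
  apply/ltW; rewrite -ltr_pdivrMr //; exact: truncnS_gt.
have [G [G0 GS [m [mG fm hm]]]] := build S0 S00 fp rc dec dp van e0 _ _ S00 fk.
exists G; split => //; exists m; split => // y Sy ym.
exact: hm y Sy (S0 y Sy) ym.
Qed.
Arguments goodG {R S f eps}.

Fixpoint accum {R : Type} (G : nat -> seq R) (n : nat) : seq R :=
  match n with 0 => G 0%N | n'.+1 => accum G n' ++ G n'.+1 end.

Lemma accum_G (R : eqType) (G : nat -> seq R) n : {subset G n <= accum G n}.
Proof. by case: n => [|n] //= x xG; rewrite mem_cat xG orbT. Qed.

Lemma accum_S (R : eqType) (G : nat -> seq R) n : {subset accum G n <= accum G n.+1}.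
Proof. by move=> x /= xG; rewrite mem_cat xG. Qed.

Lemma accum_in (R : eqType) (G : nat -> seq R) (P : R -> Prop) n :
  (forall k a, a \in G k -> P a) -> forall a, a \in accum G n -> P a.
Proof.
move=> hG; elim: n => [|n IH] a /=; first exact: hG.
by rewrite mem_cat => /orP[/IH|/hG].
Qed.

Theorem lemma2p6 (R : realType) (S : set R) (C : R) (f : R -> R) :
  (forall x, S x -> 0 <= x) -> S 0 -> 0 < C ->
  (forall x, S x -> 0 <= f x) ->
  right_cont S f -> decr_on S f -> DP S f `<=` S ->
  vanishes_at_infty S f ->
  exists F : nat -> seq R, forall n : nat,
    [/\ sorted <%R (F n), (forall x, x \in F n -> S x), 0 \in F n,
        {subset F n <= F n.+1} &
        supnormS S (fun y => stepfun S f (F n) y - f y) < C / 2 ^+ n].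
Proof.
move=> S0 S00 C0 fp rc dec dp van.
have hex : forall n : nat, exists G : seq R, [/\ 0 \in G, (forall a, a \in G -> S a) &
    exists m, [/\ m \in G, f m <= C / 2 ^+ n.+1 & forall y, S y -> y < m ->
      exists a, [/\ a \in G, a <= y & f a <= f y + C / 2 ^+ n.+1]]].
  move=> n; apply: goodG => //; rewrite divr_gt0 // exprn_gt0 //.
have [G hG] := choice hex.
pose srt (s : seq R) := sort <=%R (undup s).
have srtE : forall s x, (x \in srt s) = (x \in s) by move=> s x; rewrite mem_sort mem_undup.
exists (fun n => srt (accum G n)) => n.
have GS : forall k a, a \in G k -> S a by move=> k a; have [_ h _] := hG k; apply: h.
have sortedF : sorted <%R (srt (accum G n)).
  by rewrite lt_sorted_uniq_le sort_uniq undup_uniq /=; apply: sort_sorted; exact: le_total.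
have FS : forall x, x \in srt (accum G n) -> S x.
  by move=> x; rewrite srtE; apply: accum_in.
have [G0 _ [m [mG fm hm]]] := hG n.
have F0 : 0 \in srt (accum G n) by rewrite srtE; apply: accum_G.
split => //.
  by move=> x; rewrite !srtE; apply: accum_S.
have pos : 0 < C / 2 ^+ n by rewrite divr_gt0 // exprn_gt0.
have eq2 : C / 2 ^+ n.+1 = (C / 2 ^+ n) / 2.
  by rewrite exprS invfM mulrA mulrAC.
apply: (le_lt_trans (final_bound f (eps := C / 2 ^+ n.+1) S0 S00 fp dec sortedF FS F0 _)).
  exists m; split => //; first by rewrite srtE; apply: accum_G.
  move=> y Sy ym; have [a [aG ay fa]] := hm y Sy ym.
  by exists a; split => //; rewrite srtE; apply: accum_G.
rewrite eq2; lra.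
Qed.
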